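(* Let $a,b\ge1$, $P=[a]\times[b]$, fix an integer $k$ with $1-a\le k\le b-1$, and let $B=\{(i,j)\in P\colon j-i=k\}$. Then $\sum_{p\in B}\mathbb{1}_p\equiv c$, where $c=a(b-k)/(a+b)$ if $k\ge0$ and $c=b(a+k)/(a+b)$ if $k<0$.
   Context: $[a]\times[b]=\{(i,j)\colon 1\le i\le a,\ 1\le j\le b\}$ with $(i,j)\le(i',j')$ iff $i\le i'$ and $j\le j'$. $\mathcal{J}(P)$ is the set of order ideals of $P$. For $x\in P$, $I\in\mathcal{J}(P)$: $\mathbb{1}_x(I)=1$ if $x\in I$, else $0$; $T_x^+(I)=1$ if $x$ is a minimal element of $P\setminus I$, else $0$; $T_x^-(I)=1$ if $x$ is a maximal element of $I$, else $0$; $T_x=T_x^+-T_x^-$. For statistics $f,g\colon\mathcal{J}(P)\to\mathbb{R}$, $f\equiv g$ means there exist real constants $c_x$ ($x\in P$) with $f-g=\sum_{x\in P}c_xT_x$; a real number $c$ denotes the constant function $c$. *)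

(* Defs.v *)
From HB Require Import structures.
From mathcomp Require Import all_boot all_order all_algebra.
From mathcomp Require Import reals.
Set Implicit Arguments. Unset Strict Implicit. Unset Printing Implicit Defensive.
Import Order.TTheory GRing.Theory Num.Theory.
Local Open Scope ring_scope.

(* The poset [a] x [b]; element (i,j) : 'I_a * 'I_b stands for (i+1, j+1). *)
Definition elt (a b : nat) := ('I_a * 'I_b)%type.

Definition leP {a b : nat} (x y : elt a b) : bool :=
  ((x.1 <= y.1)%N && (x.2 <= y.2)%N).

Definition is_ideal {a b : nat} (I : {set elt a b}) : bool :=
  [forall x : elt a b, forall y : elt a b, ((y \in I) && leP x y) ==> (x \in I)].

Definition minimal_out {a b : nat} (x : elt a b) (I : {set elt a b}) : bool :=
  (x \notin I) && [forall y : elt a b, ((y \notin I) && leP y x) ==> (y == x)].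

Definition maximal_in {a b : nat} (x : elt a b) (I : {set elt a b}) : bool :=
  (x \in I) && [forall y : elt a b, ((y \in I) && leP x y) ==> (y == x)].

Definition indic {R : realType} {a b : nat} (x : elt a b) (I : {set elt a b}) : R :=
  (x \in I)%:R.
Definition Tplus {R : realType} {a b : nat} (x : elt a b) (I : {set elt a b}) : R :=
  (minimal_out x I)%:R.
Definition Tminus {R : realType} {a b : nat} (x : elt a b) (I : {set elt a b}) : R :=
  (maximal_in x I)%:R.
Definition toggle {R : realType} {a b : nat} (x : elt a b) (I : {set elt a b}) : R :=
  Tplus x I - Tminus x I.

Definition stat_equiv {R : realType} {a b : nat}
  (f g : {set elt a b} -> R) : Prop :=
  exists c : elt a b -> R, forall I : {set elt a b}, is_ideal I ->
    f I - g I = \sum_(x : elt a b) c x * toggle x I.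

(* Main.v *)
Require Import Defs.
From HB Require Import structures.
From mathcomp Require Import all_boot all_order all_algebra.
From mathcomp Require Import reals.
From mathcomp Require Import zify ring lra.
Import Order.TTheory GRing.Theory Num.Theory.
Set Implicit Arguments. Unset Strict Implicit. Unset Printing Implicit Defensive.
Local Open Scope ring_scope.

Definition cont (i j : nat) : int := (j%:Z - i%:Z)%R.

Definition vv {a b : nat} (I : {set elt a b}) (i j : nat) : bool :=
  [exists x : elt a b, [&& x \in I, (x.1 : nat) == i & (x.2 : nat) == j]].

Lemma vvP a b (I : {set elt a b}) (x : elt a b) : vv I x.1 x.2 = (x \in I).
Proof.
apply/existsP/idP => [[y /and3P [yI /eqP e1 /eqP e2]]|xI]; last first.
  by exists x; rewrite xI !eqxx.
suff -> : x = y by [].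
move: y e1 e2 {yI}; case: x => x1 x2 [y1 y2] /= e1 e2.
by congr pair; apply/val_inj.
Qed.

Lemma vv_bound a b (I : {set elt a b}) i j : vv I i j -> (i < a)%N && (j < b)%N.
Proof. by case/existsP => x /and3P [_ /eqP <- /eqP <-]; rewrite !ltn_ord. Qed.

Lemma vv_boundF1 a b (I : {set elt a b}) j : vv I a j = false.
Proof. by apply/negbTE/negP => /vv_bound; rewrite ltnn. Qed.
Lemma vv_boundF2 a b (I : {set elt a b}) i : vv I i b = false.
Proof. by apply/negbTE/negP => /vv_bound; rewrite ltnn andbF. Qed.

Lemma vv0 a b i j : vv (set0 : {set elt a b}) i j = false.
Proof. by apply/negbTE/negP => /existsP [x]; rewrite in_set0. Qed.

Lemma vv_mono a b (I : {set elt a b}) i j i' j' : is_ideal I ->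
  (i' <= i)%N -> (j' <= j)%N -> vv I i j -> vv I i' j'.
Proof.
move=> /forallP hI hi hj /existsP [x /and3P [xI /eqP e1 /eqP e2]].
have hi' : (i' < a)%N by rewrite (leq_ltn_trans hi) // -e1 ltn_ord.
have hj' : (j' < b)%N by rewrite (leq_ltn_trans hj) // -e2 ltn_ord.
apply/existsP; exists (Ordinal hi', Ordinal hj'); rewrite /= !eqxx !andbT.
move: (hI (Ordinal hi', Ordinal hj')) => /forallP /(_ x) /implyP; apply.
by rewrite xI /Defs.leP /= e1 e2 hi hj.
Qed.

Lemma pair_eq a b (x y : elt a b) : (x.1 : nat) = y.1 -> (x.2 : nat) = y.2 -> x = y.
Proof. by case: x y => x1 x2 [y1 y2] /= e1 e2; congr pair; apply/val_inj. Qed.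

Lemma minimal_outE a b (I : {set elt a b}) (x : elt a b) : is_ideal I ->
  minimal_out x I = [&& ~~ vv I x.1 x.2, ((x.1 : nat) == 0%N) || vv I x.1.-1 x.2
                       & ((x.2 : nat) == 0%N) || vv I x.1 x.2.-1].
Proof.
move=> hI; rewrite /minimal_out vvP; case xI: (x \in I) => //=.
apply/forallP/andP => [H|[h1 h2] y].
- split.
  + case: eqP => //= /eqP pos; apply: contraT => nv.
    have hy : (x.1.-1 < a)%N by rewrite (leq_ltn_trans (leq_pred _)).
    have := H (Ordinal hy, x.2).
    rewrite -(vvP I (Ordinal hy, x.2)) /= (negbTE nv) /= /Defs.leP /= leq_pred leqnn /=.
    move=> /eqP /(congr1 (fun z : elt a b => (z.1 : nat))) /= e.
    by move: pos; rewrite -lt0n -ltn_predL e ltnn.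
  + case: eqP => //= /eqP pos; apply: contraT => nv.
    have hy : (x.2.-1 < b)%N by rewrite (leq_ltn_trans (leq_pred _)).
    have := H (x.1, Ordinal hy).
    rewrite -(vvP I (x.1, Ordinal hy)) /= (negbTE nv) /= /Defs.leP /= leq_pred leqnn /=.
    move=> /eqP /(congr1 (fun z : elt a b => (z.2 : nat))) /= e.
    by move: pos; rewrite -lt0n -ltn_predL e ltnn.
- apply/implyP => /andP [ynI /andP [l1 l2]].
  rewrite -(vvP I y) in ynI.
  case: (ltngtP y.1 x.1) => [lt1|gt1|e1].
  + move: h1; case: eqP => [e|_ /= v]; first by rewrite e in lt1.
    have : (y.1 <= x.1.-1)%N by lia.
    by move=> h; rewrite (vv_mono hI h l2 v) in ynI.
  + by rewrite leqNgt gt1 in l1.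
  case: (ltngtP y.2 x.2) => [lt2|gt2|e2].
  + move: h2; case: eqP => [e|_ /= v]; first by rewrite e in lt2.
    have : (y.2 <= x.2.-1)%N by lia.
    by move=> h; rewrite (vv_mono hI l1 h v) in ynI.
  + by rewrite leqNgt gt2 in l2.
  by apply/eqP/pair_eq.
Qed.

Lemma maximal_inE a b (I : {set elt a b}) (x : elt a b) : is_ideal I ->
  maximal_in x I = [&& vv I x.1 x.2, ~~ vv I x.1.+1 x.2 & ~~ vv I x.1 x.2.+1].
Proof.
move=> hI; rewrite /maximal_in vvP; case xI: (x \in I) => //=.
apply/forallP/andP => [H|[h1 h2] y].
- split.
  + apply/negP => /existsP [y /and3P [yI /eqP e1 /eqP e2]].
    have := H y; rewrite yI /Defs.leP e1 e2 leqnSn leqnn /=.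
    move=> /eqP /(congr1 (fun z : elt a b => (z.1 : nat))) /=.
    by rewrite e1 => e; lia.
  + apply/negP => /existsP [y /and3P [yI /eqP e1 /eqP e2]].
    have := H y; rewrite yI /Defs.leP e1 e2 leqnSn leqnn /=.
    move=> /eqP /(congr1 (fun z : elt a b => (z.2 : nat))) /=.
    by rewrite e2 => e; lia.
- apply/implyP => /andP [yI /andP [l1 l2]].
  rewrite -(vvP I y) in yI.
  case: (ltngtP x.1 y.1) => [lt1|gt1|e1].
  + by rewrite (vv_mono hI lt1 (leqnn _) (vv_mono hI (leqnn _) l2 yI)) in h1.
  + by rewrite leqNgt gt1 in l1.
  case: (ltngtP x.2 y.2) => [lt2|gt2|e2].
  + by rewrite (vv_mono hI (leqnn _) lt2 (vv_mono hI l1 (leqnn _) yI)) in h2.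
  + by rewrite leqNgt gt2 in l2.
  by apply/eqP/pair_eq.
Qed.

Definition uu {a b : nat} (I : {set elt a b}) (i j : nat) : bool :=
  if i is i'.+1 then (if j is j'.+1 then vv I i' j' else (i <= a)%N) else (j <= b)%N.
Definition Bp {a b : nat} (I : {set elt a b}) (i j : nat) : bool :=
  [&& uu I i j.+1, uu I i.+1 j & ~~ uu I i.+1 j.+1].
Definition Bm {a b : nat} (I : {set elt a b}) (i j : nat) : bool :=
  [&& uu I i j, ~~ uu I i j.+1 & ~~ uu I i.+1 j].

Lemma toggleE (R : realType) a b (I : {set elt a b}) (x : elt a b) : is_ideal I ->
  (toggle x I : R) = (Bp I x.1 x.2)%:R - (Bm I x.1.+1 x.2.+1)%:R.
Proof.
move=> hI; rewrite /toggle /Tplus /Tminus minimal_outE // maximal_inE //.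
rewrite /Bp /Bm /=.
move: (nat_of_ord x.1) (nat_of_ord x.2) (ltn_ord x.1) (ltn_ord x.2) => i j hi hj.
case: i hi => [|i] hi; case: j hj => [|j] hj /=; rewrite ?hi ?hj ?andbT;
  by repeat match goal with |- context [vv I ?p ?q] => case: (vv I p q) end.
Qed.

Lemma uu_mono1 a b (I : {set elt a b}) i j : is_ideal I -> uu I i j.+1 ==> uu I i j.
Proof.
move=> hI; apply/implyP; case: i => [|i] /=; first by move=> h; apply: ltnW.
case: j => [|j] h; first by move: (vv_bound h) => /andP [].
exact: (vv_mono hI (leqnn _) (leqnSn _) h).
Qed.

Lemma uu_mono2 a b (I : {set elt a b}) i j : is_ideal I -> uu I i.+1 j ==> uu I i j.
Proof.
move=> hI; apply/implyP; case: j => [|j] /=.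
  by case: i => [|i] //= h; apply: ltnW.
case: i => [|i] h /=; first by move: (vv_bound h) => /andP [].
exact: (vv_mono hI (leqnSn _) (leqnn _) h).
Qed.

Lemma block (R : realType) (p q r s : bool) : q ==> p -> r ==> p -> s ==> q -> s ==> r ->
  ([&& q, r & ~~ s]%:R - [&& p, ~~ q & ~~ r]%:R : R) = q%:R + r%:R - p%:R - s%:R.
Proof. by case: p; case: q; case: r; case: s => //= *; ring. Qed.

Definition gk (R : realType) (a b : nat) (k d : int) : R :=
  if d <= k then - ((d%:~R + a%:R) * (b%:R - k%:~R)) / (a + b)%:R
  else - ((k%:~R + a%:R) * (b%:R - d%:~R)) / (a + b)%:R.

Lemma Lg (R : realType) a b k d : (0 < a)%N ->
  gk R a b k (d - 1) + gk R a b k (d + 1) - gk R a b k d *+ 2 = (d == k)%:R.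
Proof.
move=> a0; have S0 : (a + b)%:R != 0 :> R by rewrite pnatr_eq0 -lt0n addn_gt0 a0.
rewrite /gk natrD in S0 *; rewrite !intrB !intrD (_ : (1%:~R : R) = 1) //.
case: (ltgtP d k) => h.
- have -> : (d - 1 <= k) = true by apply/idP; lia.
  have -> : (d + 1 <= k) = true by apply/idP; lia.
  rewrite /= mulr2n; field => //.
- have -> : (d + 1 <= k) = false by apply/negbTE; rewrite -ltNge; lia.
  case: ifP => h1.
    have -> : (d%:~R : R) = k%:~R + 1.
      by rewrite (_ : d = k + 1) ?intrD //; lia.
    rewrite /= mulr2n; field => //.
  rewrite /= mulr2n; field => //.
- rewrite h ?eqxx.
  have -> : (k - 1 <= k) = true by apply/idP; lia.
  have -> : (k + 1 <= k) = false by apply/negbTE; rewrite -ltNge; lia.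
  rewrite ?lexx /= mulr2n; field => //.
Qed.

Lemma g_b (R : realType) a b k : k <= b%:Z - 1 -> gk R a b k (cont 0 b) = 0.
Proof.
move=> h; rewrite /gk /cont.
have -> : (b%:Z - 0%:Z <= k) = false by apply/negbTE; rewrite -ltNge; lia.
by rewrite subr0 subrr mulr0 oppr0 mul0r.
Qed.

Lemma g_a (R : realType) a b k : 1 - a%:Z <= k -> gk R a b k (cont a 0) = 0.
Proof.
move=> h; rewrite /gk /cont.
have -> : (0%:Z - a%:Z <= k) = true by apply/idP; lia.
by rewrite sub0r intrN addNr mul0r oppr0 mul0r.
Qed.


Lemma ext1 (R : realType) (h : nat -> R) n : h n.+1 = 0 ->
  \sum_(0 <= i < n.+1) h i = \sum_(0 <= i < n.+2) h i.
Proof. by move=> hn; rewrite [RHS]big_nat_recr //= hn addr0. Qed.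

Lemma ext1S (R : realType) (h : nat -> R) n : h 0%N = 0 ->
  \sum_(0 <= i < n.+1) h i.+1 = \sum_(0 <= i < n.+2) h i.
Proof. by move=> h0; rewrite [RHS]big_nat_recl // h0 add0r. Qed.

Lemma sum0_nat (R : realType) (h : nat -> R) n : (forall i, h i = 0) ->
  \sum_(0 <= i < n) h i = 0.
Proof. by move=> H; rewrite big1. Qed.

Lemma L2 (R : realType) (F : nat -> nat -> R) a b :
  (forall j, F 0%N j = 0) -> (forall i, F i 0%N = 0) ->
  (forall j, F a.+1 j = 0) -> (forall i, F i b.+1 = 0) ->
  [/\ \sum_(0 <= i < a.+1) \sum_(0 <= j < b.+1) F i j
       = \sum_(0 <= i < a.+2) \sum_(0 <= j < b.+2) F i j,
      \sum_(0 <= i < a.+1) \sum_(0 <= j < b.+1) F i j.+1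
       = \sum_(0 <= i < a.+2) \sum_(0 <= j < b.+2) F i j,
      \sum_(0 <= i < a.+1) \sum_(0 <= j < b.+1) F i.+1 j
       = \sum_(0 <= i < a.+2) \sum_(0 <= j < b.+2) F i j &
      \sum_(0 <= i < a.+1) \sum_(0 <= j < b.+1) F i.+1 j.+1
       = \sum_(0 <= i < a.+2) \sum_(0 <= j < b.+2) F i j].
Proof.
move=> h1 h2 h3 h4; split.
- rewrite ext1; last by rewrite sum0_nat.
  by apply: eq_bigr => i _; rewrite ext1.
- rewrite ext1; last by rewrite sum0_nat.
  by apply: eq_bigr => i _; rewrite ext1S.
- rewrite (ext1S (h := fun i => \sum_(0 <= j < b.+1) F i j)); last by rewrite sum0_nat.
  by apply: eq_bigr => i _; rewrite ext1.
- rewrite (ext1S (h := fun i => \sum_(0 <= j < b.+1) F i j.+1)); last by rewrite sum0_nat.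
  by apply: eq_bigr => i _; rewrite ext1S.
Qed.

Lemma L_trunc (R : realType) (H : nat -> nat -> R) a b :
  (forall j, H a j = 0) -> (forall i, H i b = 0) ->
  \sum_(0 <= i < a.+1) \sum_(0 <= j < b.+1) H i j
   = \sum_(0 <= i < a) \sum_(0 <= j < b) H i j.
Proof.
move=> h1 h2; rewrite big_nat_recr //= [X in _ + X]sum0_nat // addr0.
by apply: eq_bigr => i _; rewrite big_nat_recr //= h2 addr0.
Qed.

Lemma pairsum (R : realType) a b (F : nat -> nat -> R) :
  \sum_(x : elt a b) F x.1 x.2 = \sum_(0 <= i < a) \sum_(0 <= j < b) F i j.
Proof.
rewrite /elt -(pair_big predT predT (fun (i : 'I_a) (j : 'I_b) => F i j)) /=.
rewrite big_mkord; apply: eq_bigr => i _; by rewrite big_mkord.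
Qed.

Definition SS (R : realType) a b k (I : {set elt a b}) : R :=
  \sum_(0 <= i < a) \sum_(0 <= j < b)
     gk R a b k (cont i j) * ((Bp I i j)%:R - (Bm I i.+1 j.+1)%:R).

Definition EE (R : realType) a b k (f : nat -> nat -> R) : R :=
  \sum_(0 <= i < a.+1) \sum_(0 <= j < b.+1)
     gk R a b k (cont i j) * (f i j.+1 + f i.+1 j - f i j - f i.+1 j.+1).

Lemma contSS i j : cont i.+1 j.+1 = cont i j.
Proof. rewrite /cont; lia. Qed.
Lemma contS2 i j : cont i j.+1 = cont i j + 1.
Proof. rewrite /cont; lia. Qed.
Lemma contS1 i j : cont i.+1 j = cont i j - 1.
Proof. rewrite /cont; lia. Qed.

Lemma stepA (R : realType) a b k (I : {set elt a b}) : is_ideal I ->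
  \sum_(x : elt a b) gk R a b k (cont x.1 x.2) * toggle x I = SS R k I.
Proof.
move=> hI; rewrite /SS -pairsum; apply: eq_bigr => x _; by rewrite toggleE.
Qed.

Lemma stepB (R : realType) a b k (I : {set elt a b}) : is_ideal I ->
  1 - a%:Z <= k -> k <= b%:Z - 1 ->
  SS R k I = EE a b k (fun i j => (uu I i j)%:R).
Proof.
move=> hI hk1 hk2; rewrite /SS.
under eq_bigr => i _ do under eq_bigr => j _ do rewrite mulrBr.
under eq_bigr => i _ do rewrite sumrB.
rewrite sumrB.
rewrite -(L_trunc (H := fun i j => gk R a b k (cont i j) * (Bp I i j)%:R)); first last.
- move=> i; rewrite /Bp /=; case: i => [|i] /=; first by rewrite ltnn mulr0.
  by rewrite vv_boundF2 mulr0.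
- move=> j; rewrite /Bp /=; case: j => [|j] /=; first by rewrite ltnn !andbF mulr0.
  by rewrite vv_boundF1 !andbF mulr0.
have -> : \sum_(0 <= i < a) \sum_(0 <= j < b)
      gk R a b k (cont i j) * (Bm I i.+1 j.+1)%:R =
    \sum_(0 <= i < a.+1) \sum_(0 <= j < b.+1) gk R a b k (cont i j) * (Bm I i j)%:R.
  have row0 : \sum_(0 <= j < b.+1) gk R a b k (cont 0 j) * (Bm I 0 j)%:R = 0.
    rewrite big_nat_cond big1 // => j /andP [/andP [_ hj] _]; rewrite /Bm /=.
    case: (ltngtP j b) => hjb.
    + by rewrite ?hjb /= ?andbF mulr0.
    + lia.
    + by rewrite hjb g_b // mul0r.
  rewrite [RHS]big_nat_recl // row0 add0r.
  apply: eq_big_nat => i /andP [_ hi].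
  rewrite [RHS]big_nat_recl //.
  have -> : gk R a b k (cont i.+1 0) * (Bm I i.+1 0)%:R = 0.
    rewrite /Bm /=; case: (ltngtP i.+1 a) => hia.
    + by rewrite ?hia /= ?andbF mulr0.
    + lia.
    + by rewrite hia g_a // mul0r.
  rewrite add0r; apply: eq_bigr => j _; by rewrite contSS.
rewrite -sumrB /EE; apply: eq_bigr => i _; rewrite -sumrB; apply: eq_bigr => j _.
rewrite -mulrBr; congr (_ * _).
rewrite /Bp /Bm; apply: block.
- exact: uu_mono1.
- exact: uu_mono2.
- exact: uu_mono2.
- exact: uu_mono1.
Qed.

Definition u0 (a b : nat) (i j : nat) : bool :=
  if i is _.+1 then (if j is _.+1 then false else (i <= a)%N) else (j <= b)%N.
Definition w {a b : nat} (I : {set elt a b}) (i j : nat) : bool :=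
  if i is i'.+1 then (if j is j'.+1 then vv I i' j' else false) else false.

Lemma EE_add (R : realType) a b k (f1 f2 : nat -> nat -> R) :
  EE a b k (fun i j => f1 i j + f2 i j) = EE a b k f1 + EE a b k f2.
Proof.
rewrite /EE -big_split; apply: eq_bigr => i _; rewrite -big_split; apply: eq_bigr => j _ /=.
ring.
Qed.

Lemma EE_ext (R : realType) a b k (f1 f2 : nat -> nat -> R) :
  (forall i j, f1 i j = f2 i j) -> EE a b k f1 = EE a b k f2.
Proof.
move=> e; rewrite /EE; apply: eq_bigr => i _; apply: eq_bigr => j _; by rewrite !e.
Qed.

Lemma EE_uu (R : realType) a b k (I : {set elt a b}) :
  EE a b k (fun i j => ((uu I i j)%:R : R)) =
  EE a b k (fun i j => ((u0 a b i j)%:R : R)) + EE a b k (fun i j => ((w I i j)%:R : R)).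
Proof.
rewrite -EE_add; apply: EE_ext => i j.
by case: i => [|i]; case: j => [|j] /=; rewrite ?addr0 ?add0r.
Qed.

Lemma EE_w0 (R : realType) a b k :
  EE a b k (fun i j => ((w (set0 : {set elt a b}) i j)%:R : R)) = 0.
Proof.
rewrite /EE big1 // => i _; rewrite big1 // => j _.
have z i' j' : w (set0 : {set elt a b}) i' j' = false.
  by case: i' => [|i'] //; case: j' => [|j'] //=; rewrite vv0.
by rewrite !z (_ : (false%:R : R) = 0) // addr0 !subrr mulr0.
Qed.

Lemma w_0j a b (I : {set elt a b}) j : w I 0 j = false. Proof. by []. Qed.
Lemma w_i0 a b (I : {set elt a b}) i : w I i 0 = false. Proof. by case: i. Qed.
Lemma w_aj a b (I : {set elt a b}) j : w I a.+1 j = false.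
Proof. by case: j => [|j] //=; rewrite vv_boundF1. Qed.
Lemma w_ib a b (I : {set elt a b}) i : w I i b.+1 = false.
Proof. by case: i => [|i] //=; rewrite vv_boundF2. Qed.

Lemma stepD (R : realType) a b k (I : {set elt a b}) : (0 < a)%N ->
  EE a b k (fun i j => ((w I i j)%:R : R)) =
  \sum_(p : elt a b | (p.2)%:Z - (p.1)%:Z == k) (indic p I : R).
Proof.
move=> a0.
pose F1 i j := gk R a b k (cont i j - 1) * (w I i j)%:R.
pose F2 i j := gk R a b k (cont i j + 1) * (w I i j)%:R.
pose F3 i j := gk R a b k (cont i j) * (w I i j)%:R.
have hF (F : nat -> nat -> R) (g : int -> R) : (forall i j, F i j = g (cont i j) * (w I i j)%:R) ->
   [/\ forall j, F 0%N j = 0, forall i, F i 0%N = 0, forall j, F a.+1 j = 0 & forall i, F i b.+1 = 0].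
  move=> e; split => *; by rewrite e ?w_0j ?w_i0 ?w_aj ?w_ib mulr0.
have [h11 h12 h13 h14] := hF F1 (fun d => gk R a b k (d - 1)) (fun i j => erefl).
have [h21 h22 h23 h24] := hF F2 (fun d => gk R a b k (d + 1)) (fun i j => erefl).
have [h31 h32 h33 h34] := hF F3 (gk R a b k) (fun i j => erefl).
have [_ e1 _ _] := L2 h11 h12 h13 h14.
have [_ _ e2 _] := L2 h21 h22 h23 h24.
have [e3 _ _ e4] := L2 h31 h32 h33 h34.
rewrite /EE.
have -> : \sum_(0 <= i < a.+1) \sum_(0 <= j < b.+1)
     gk R a b k (cont i j) * ((w I i j.+1)%:R + (w I i.+1 j)%:R - (w I i j)%:R - (w I i.+1 j.+1)%:R)
   = \sum_(0 <= i < a.+1) \sum_(0 <= j < b.+1) (F1 i j.+1 + F2 i.+1 j - F3 i j - F3 i.+1 j.+1).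
  apply: eq_bigr => i _; apply: eq_bigr => j _.
  rewrite /F1 /F2 /F3 contS2 contS1 contSS addrK subrK; ring.
under eq_bigr => i _ do rewrite !sumrB big_split /=.
rewrite !sumrB big_split /= e1 e2 e3 e4 -big_split -!sumrB /=.
under eq_bigr => i _ do rewrite -big_split -!sumrB /=.
have -> : \sum_(0 <= i < a.+2) \sum_(0 <= j < b.+2) (F1 i j + F2 i j - F3 i j - F3 i j)
   = \sum_(0 <= i < a.+2) \sum_(0 <= j < b.+2) ((w I i j)%:R * (cont i j == k)%:R).
  apply: eq_bigr => i _; apply: eq_bigr => j _.
  rewrite /F1 /F2 /F3 -(Lg R b k (cont i j) a0) mulr2n; ring.
pose G i j : R := (w I i j)%:R * (cont i j == k)%:R.
have hG : [/\ forall j, G 0%N j = 0, forall i, G i 0%N = 0, forall j, G a.+1 j = 0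
             & forall i, G i b.+1 = 0].
  by split => *; rewrite /G ?w_0j ?w_i0 ?w_aj ?w_ib mul0r.
case: hG => g1 g2 g3 g4; have [_ _ _ <-] := L2 g1 g2 g3 g4.
rewrite /G /= (L_trunc (H := fun i j => (vv I i j)%:R * (cont i.+1 j.+1 == k)%:R)); first last.
- by move=> i; rewrite vv_boundF2 mul0r.
- by move=> j; rewrite vv_boundF1 mul0r.
rewrite big_mkcond /= -(pairsum a b (fun i j => (vv I i j)%:R * (cont i.+1 j.+1 == k)%:R : R)).
rewrite [RHS]big_mkcond; apply: eq_bigr => x _; rewrite vvP contSS /cont /indic.
by case: ifP; rewrite ?mulr1 ?mulr0.
Qed.

Lemma S0 (R : realType) a b k : (0 < a)%N -> (0 < b)%N ->
  SS R k (set0 : {set elt a b}) = gk R a b k 0.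
Proof.
case: a => // a _; case: b => // b _.
rewrite /SS big_nat_recl // [X in X + _]big_nat_recl //.
rewrite [X in _ + X + _]big1; last first.
  by move=> j _; rewrite /Bp /Bm /= !vv0 /= ?andbF subrr mulr0.
rewrite [X in _ + X]big1; last first.
  move=> i _; rewrite big1 // => j _.
  by rewrite /Bp /Bm /= !vv0 /= ?andbF subrr mulr0.
rewrite /Bp /Bm /= !vv0 /= !addr0 subr0 mulr1.
by rewrite /cont subrr.
Qed.

Lemma ideal0 a b : is_ideal (set0 : {set elt a b}).
Proof. by apply/forallP => x; apply/forallP => y; rewrite in_set0. Qed.

Theorem theorem3p10 (R : realType) (a b : nat) (k : int) :
  (1 <= a)%N -> (1 <= b)%N -> 1 - (a%:Z) <= k -> k <= (b%:Z) - 1 ->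
  stat_equiv
    (fun I : {set elt a b} =>
       \sum_(p : elt a b | (p.2)%:Z - (p.1)%:Z == k) (indic p I : R))
    (fun _ => if 0 <= k
              then (a%:R * (b%:R - k%:~R)) / (a + b)%:R
              else (b%:R * (a%:R + k%:~R)) / (a + b)%:R).
Proof.
move=> ha hb hk1 hk2.
have E0 : EE a b k (fun i j => ((u0 a b i j)%:R : R)) = gk R a b k 0.
  rewrite -(S0 R k ha hb) stepB ?ideal0 // EE_uu EE_w0 addr0.
  by apply: EE_ext => i j; case: i => [|i]; case: j => [|j] //=; rewrite vv0.
exists (fun x : elt a b => gk R a b k (cont x.1 x.2)) => I hI.
rewrite stepA // stepB // EE_uu E0 stepD //.
have S0' : (a + b)%:R != 0 :> R by rewrite pnatr_eq0 -lt0n addn_gt0 ha.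
rewrite natrD in S0'.
rewrite /gk; case: ifP => _; rewrite /=; field => //.
Qed.
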